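(* Fix $x\in\mathbb{R}^n$ (deterministic) and let $A$ follow the stochastic block model described in the context. Then for every $k\in[K]$, $$\lambda_{\min}\big(\mathbb{E}(H_k)\big)\ \ge\ \min_{k'\in[K]} B_{k',k}(1-B_{k',k})(n_k-1)\,\|x^{(k')}\|_2^2,$$ where the expectation is over $A$.
   Context: Let $n\ge2$, $K\ge1$, $Z\in\{0,1\}^{n\times K}$ a community membership matrix (each row has exactly one $1$), $\psi_i$ the community of node $i$, $n_k=\sum_i Z_{i,k}\ge1$. Stochastic block model: $B\in[0,1]^{K\times K}$ symmetric, $P=ZBZ^\top$; the entries $\{A_{i,j}\}_{i<j}$ are independent Bernoulli$(P_{i,j})$ random variables, $A_{j,i}=A_{i,j}$, and $A_{i,i}=1$ for all $i$ (deterministic self-loops). $*$ is the Hadamard product, $1_n$ the all-ones vector. $M_k=\mathrm{diag}(Z_{\cdot,k})(1_n x^\top * A)Z\in\mathbb{R}^{n\times K}$, $H_k=M_k^\top M_k$, and $x^{(k')}=Z_{\cdot,k'}*x$ (the entries of $x$ in community $k'$, zero elsewhere). $\lambda_{\min}$ denotes smallest eigenvalue. *)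

(* Defs.v *)
From HB Require Import structures.
From mathcomp Require Import all_boot all_order all_algebra.
From mathcomp Require Import reals.
Set Implicit Arguments. Unset Strict Implicit. Unset Printing Implicit Defensive.
Import Order.TTheory GRing.Theory Num.Theory.
Local Open Scope ring_scope.

Section SBM.
Variables (R : realType) (n K : nat).

Definition Zmat (psi : 'I_n -> 'I_K) : 'M[R]_(n, K) :=
  \matrix_(i < n, k < K) (psi i == k)%:R.

Definition comm_size (psi : 'I_n -> 'I_K) (k : 'I_K) : nat :=
  #|[set i | psi i == k]|.

Definition hadamard (m p : nat) (A B : 'M[R]_(m, p)) : 'M[R]_(m, p) :=
  map2_mx *%R A B.

(* Unordered pairs {i,j} with i < j : the index set of independent entries *)
Definition upair := {p : 'I_n * 'I_n | (p.1 < p.2)%N}.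

(* sample space: one Bernoulli outcome per pair i < j *)
Definition outcome := {ffun upair -> bool}.

(* adjacency matrix built from an outcome: symmetric, diagonal = 1 *)
Definition adj (w : outcome) : 'M[R]_n :=
  \matrix_(i < n, j < n)
    (if (insub (i, j) : option upair) is Some p then (w p)%:R
     else if (insub (j, i) : option upair) is Some p then (w p)%:R
     else 1).

Definition weight (P : 'M[R]_n) (w : outcome) : R :=
  \prod_(p : upair) (if w p then P (val p).1 (val p).2
                     else 1 - P (val p).1 (val p).2).

Definition Expect (P : 'M[R]_n) (m p : nat) (F : 'M[R]_n -> 'M[R]_(m, p))
  : 'M[R]_(m, p) :=
  \sum_(w : outcome) weight P w *: F (adj w).

Definition Mk (psi : 'I_n -> 'I_K) (x : 'cV[R]_n) (k : 'I_K) (A : 'M[R]_n)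
  : 'M[R]_(n, K) :=
  diag_mx (col k (Zmat psi))^T
    *m hadamard ((const_mx 1 : 'cV[R]_n) *m x^T) A *m Zmat psi.

Definition Hk (psi : 'I_n -> 'I_K) (x : 'cV[R]_n) (k : 'I_K) (A : 'M[R]_n)
  : 'M[R]_K :=
  (Mk psi x k A)^T *m Mk psi x k A.

Definition xcomm (psi : 'I_n -> 'I_K) (x : 'cV[R]_n) (k' : 'I_K) : 'cV[R]_n :=
  hadamard (col k' (Zmat psi)) x.

Definition sqnorm (v : 'cV[R]_n) : R := \sum_(i < n) v i 0 ^+ 2.

Definition min_over (f : 'I_K -> R) (k0 : 'I_K) : R :=
  \big[Order.min/f k0]_(k' < K) f k'.

Definition lambda_min_ge (S : 'M[R]_K) (c : R) : Prop :=
  forall a : R, eigenvalue S a -> c <= a.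

End SBM.

(* Main.v *)
Require Import Defs.
From HB Require Import structures.
From mathcomp Require Import all_boot all_order all_algebra.
From mathcomp Require Import reals ring.
Import Order.TTheory GRing.Theory Num.Theory.
Local Open Scope ring_scope.
Set Implicit Arguments. Unset Strict Implicit.
Definition pi (R : realType) n (P : 'M[R]_n) (p : upair n) : R :=
  P (val p).1 (val p).2.

Lemma Eprod (R : realType) n (P : 'M[R]_n) (g : upair n -> bool -> R) :
  \sum_(w : outcome n) weight P w * \prod_p g p (w p) =
  \prod_p (pi P p * g p true + (1 - pi P p) * g p false).
Proof.
pose F := fun p b => (if b then pi P p else 1 - pi P p) * g p b.
transitivity (\sum_(f : {ffun upair n -> bool}) \prod_p F p (f p)).
  by apply: eq_bigr => w _; rewrite /weight -big_split.
rewrite -(bigA_distr_bigA F); apply: eq_bigr => p _.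
by rewrite big_bool.
Qed.

Definition EE (R : realType) n (P : 'M[R]_n) (f : outcome n -> R) : R :=
  \sum_(w : outcome n) weight P w * f w.

Lemma eq_EE (R : realType) n (P : 'M[R]_n) (f g : outcome n -> R) :
  (forall w, f w = g w) -> EE P f = EE P g.
Proof. by move=> h; apply: eq_bigr => w _; rewrite h. Qed.

Lemma prod1_if (R : realType) n (q : upair n) (h : upair n -> R) :
  \prod_p (if p == q then h p else 1) = h q.
Proof. by rewrite -big_mkcond /= big_pred1_eq. Qed.

Lemma prod2_if (R : realType) n (q q' : upair n) (h h' : upair n -> R) :
  q != q' ->
  \prod_p (if p == q then h p else if p == q' then h' p else 1) = h q * h' q'.
Proof.
move=> qq'; rewrite (bigD1 q) //= eqxx (bigD1 q') /=; last by rewrite eq_sym.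
rewrite eq_sym (negbTE qq') eqxx big1 ?mulr1 ?mulrA // => p /andP[pq pq'].
by rewrite (negbTE pq) (negbTE pq').
Qed.

Lemma EEprod (R : realType) n (P : 'M[R]_n) (g : upair n -> bool -> R) f :
  (forall w : outcome n, f w = \prod_p g p (w p)) ->
  EE P f = \prod_p (pi P p * g p true + (1 - pi P p) * g p false).
Proof. by move=> h; rewrite -Eprod; apply: eq_bigr => w _; rewrite h. Qed.

Lemma EE1 (R : realType) n (P : 'M[R]_n) : EE P (fun => 1) = 1.
Proof.
have h : forall w : outcome n, 1 = \prod_p (fun _ _ => 1 : R) p (w p).
  by move=> w; rewrite big1.
by rewrite (EEprod P (g := fun _ _ => 1) h) big1 // => p _; ring.
Qed.

Lemma EEZ (R : realType) n (P : 'M[R]_n) q :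
  EE P (fun w => (w q)%:R - pi P q) = 0.
Proof.
pose G := fun p (b : bool) =>
    if p == q then b%:R - pi P q else 1.
have h : forall w : outcome n, (w q)%:R - pi P q = \prod_p G p (w p).
  by move=> w; rewrite prod1_if.
rewrite (EEprod P (g := G) h) /G (bigD1 q) //= eqxx.
have -> : pi P q * (1%:R - pi P q) + (1 - pi P q) * (0%:R - pi P q) = 0 by ring.
by rewrite mul0r.
Qed.

Lemma EEZ2 (R : realType) n (P : 'M[R]_n) q :
  EE P (fun w => ((w q)%:R - pi P q) ^+ 2) = pi P q * (1 - pi P q).
Proof.
pose G := fun p (b : bool) =>
    if p == q then (b%:R - pi P q) ^+ 2 else 1.
have h : forall w : outcome n, ((w q)%:R - pi P q) ^+ 2 = \prod_p G p (w p).
  by move=> w; rewrite prod1_if.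
rewrite (EEprod P (g := G) h) /G (bigD1 q) //= eqxx big1 => [|p /negbTE -> ]; last ring.
rewrite mulr1; ring.
Qed.

Lemma EEZZ (R : realType) n (P : 'M[R]_n) q q' : q != q' ->
  EE P (fun w => ((w q)%:R - pi P q) * ((w q')%:R - pi P q')) = 0.
Proof.
move=> qq'.
pose G := fun p (b : bool) =>
    if p == q then b%:R - pi P q else if p == q' then b%:R - pi P q' else 1.
have h : forall w : outcome n, ((w q)%:R - pi P q) * ((w q')%:R - pi P q') =
  \prod_p G p (w p).
  by move=> w; rewrite (prod2_if (fun p => (w p)%:R - pi P q) (fun p => (w p)%:R - pi P q')).
rewrite (EEprod P (g := G) h) /G (bigD1 q) //= eqxx.
have -> : pi P q * (1%:R - pi P q) + (1 - pi P q) * (0%:R - pi P q) = 0 by ring.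
by rewrite mul0r.
Qed.

Lemma adj_diag (R : realType) n (w : outcome n) (i : 'I_n) : adj R w i i = 1.
Proof. by rewrite /adj mxE !insubF //= ltnn. Qed.

Lemma adj_pair (R : realType) n (P : 'M[R]_n) (i j : 'I_n) :
  (forall a b, P a b = P b a) -> i != j ->
  exists p : upair n, [/\ (val p = (i, j) \/ val p = (j, i)),
     pi P p = P i j & forall w, adj R w i j = (w p)%:R].
Proof.
move=> Ps ij; case: (ltngtP i j) => h.
- exists (Sub (i, j) h); split; [by left | by [] | ].
  by move=> w; rewrite /adj mxE insubT.
- exists (Sub (j, i) h); split; [by right | by rewrite /pi /= Ps | ].
  by move=> w; rewrite /adj mxE insubF /= ?insubT // ltnNge ltnW.
- by move: ij; rewrite (val_inj h) eqxx.
Qed.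

Lemma EE_sum (R : realType) n (P : 'M[R]_n) (I : finType) (F : I -> outcome n -> R) :
  EE P (fun w => \sum_j F j w) = \sum_j EE P (F j).
Proof.
rewrite /EE; under eq_bigr do rewrite mulr_sumr; exact: exchange_big.
Qed.

Lemma EE_scale (R : realType) n (P : 'M[R]_n) c (f : outcome n -> R) :
  EE P (fun w => c * f w) = c * EE P f.
Proof. by rewrite /EE mulr_sumr; apply: eq_bigr => w _; rewrite mulrCA. Qed.

Lemma EE_add (R : realType) n (P : 'M[R]_n) (f g : outcome n -> R) :
  EE P (fun w => f w + g w) = EE P f + EE P g.
Proof. by rewrite /EE -big_split; apply: eq_bigr => w _; rewrite mulrDr. Qed.

Lemma EE0 (R : realType) n (P : 'M[R]_n) : EE P (fun => 0) = 0.
Proof. by rewrite /EE big1 // => w _; rewrite mulr0. Qed.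

Definition rho (R : realType) n (P : 'M[R]_n) (i j : 'I_n) : R :=
  if j == i then 1 else P i j.
Definition Vv (R : realType) n (P : 'M[R]_n) (i j : 'I_n) : R :=
  if j == i then 0 else P i j * (1 - P i j).

Lemma EED (R : realType) n (P : 'M[R]_n) i j : (forall a b, P a b = P b a) ->
  EE P (fun w => adj R w i j - rho P i j) = 0.
Proof.
move=> Ps; have [->|ji] := eqVneq j i.
  by rewrite -(EE0 P); apply: eq_EE => w; rewrite adj_diag /rho eqxx subrr.
have ij : i != j by rewrite eq_sym.
have [p [_ pp hp]] := adj_pair Ps ij.
rewrite -(EEZ P p); apply: eq_EE => w; by rewrite hp /rho (negbTE ji) pp.
Qed.

Lemma EEDD (R : realType) n (P : 'M[R]_n) i j j' : (forall a b, P a b = P b a) ->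
  EE P (fun w => (adj R w i j - rho P i j) * (adj R w i j' - rho P i j')) =
  if j == j' then Vv P i j else 0.
Proof.
move=> Ps; have [->|ji] := eqVneq j i.
  rewrite /Vv eqxx; case: ifP => _; rewrite -(EE0 P); apply: eq_EE => w;
  by rewrite (adj_diag R) /rho eqxx subrr ?mul0r ?mulr0.
have [->|j'i] := eqVneq j' i.
  rewrite /Vv (negbTE ji) -(EE0 P); apply: eq_EE => w.
  by rewrite (adj_diag R) /rho eqxx subrr mulr0.
have ij : i != j by rewrite eq_sym.
have ij' : i != j' by rewrite eq_sym.
have [p [vp pp hp]] := adj_pair Ps ij.
have [p' [vp' pp' hp']] := adj_pair Ps ij'.
have [<-|jj'] := eqVneq j j'.
  rewrite /Vv (negbTE ji) -pp -(EEZ2 P p); apply: eq_EE => w.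
  by rewrite hp /rho (negbTE ji) pp expr2.
have pp'ne : p != p'.
  apply/eqP => e; have ne1 : j != j' := jj'.
  move: vp'; rewrite -e; case: vp => -> [] [] //;
  by intros; subst; rewrite ?eqxx in ji j'i jj'.
rewrite -(EEZZ P pp'ne); apply: eq_EE => w.
by rewrite hp hp' /rho (negbTE ji) (negbTE j'i) pp pp'.
Qed.

Lemma EEsq (R : realType) n (P : 'M[R]_n) i (y : 'I_n -> R) :
  (forall a b, P a b = P b a) ->
  \sum_j y j ^+ 2 * Vv P i j <= EE P (fun w => (\sum_j y j * adj R w i j) ^+ 2).
Proof.
move=> Ps.
pose m := \sum_j y j * rho P i j.
pose D := fun j (w : outcome n) => adj R w i j - rho P i j.
pose T := fun w => \sum_j y j * D j w.
have pt : forall w, (\sum_j y j * adj R w i j) ^+ 2 =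
   (\sum_j \sum_j' (y j * y j') * (D j w * D j' w)) + ((2 * m) * T w + m ^+ 2).
  move=> w.
  have -> : \sum_j y j * adj R w i j = T w + m.
    rewrite /T /m -big_split; apply: eq_bigr => j _ /=; rewrite /D; ring.
  have -> : \sum_j \sum_j' (y j * y j') * (D j w * D j' w) = T w * T w.
    rewrite /T mulr_suml; apply: eq_bigr => j _; rewrite mulr_sumr.
    by apply: eq_bigr => j' _; ring.
  ring.
rewrite (eq_EE P pt).
rewrite (EE_add P (fun w => \sum_j \sum_j' (y j * y j') * (D j w * D j' w))
                  (fun w => (2 * m) * T w + m ^+ 2)).
rewrite (EE_add P (fun w => (2 * m) * T w) (fun w => m ^+ 2)).
rewrite (EE_scale P (2 * m) T).
have -> : EE P T = 0.
  rewrite /T (EE_sum P (fun j w => y j * D j w)) big1 // => j _.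
  by rewrite (EE_scale P (y j) (D j)) /D EED // mulr0.
have -> : EE P (fun => m ^+ 2) = m ^+ 2.
  rewrite -[X in _ = X]mulr1 -(EE1 P) -EE_scale.
  by apply: eq_EE => w; rewrite mulr1.
have /= -> := EE_sum P (fun j w => \sum_j' (y j * y j') * (D j w * D j' w)).
have -> : \sum_j EE P (fun w => \sum_j' (y j * y j') * (D j w * D j' w)) =
          \sum_j y j ^+ 2 * Vv P i j.
  apply: eq_bigr => j _.
  have /= -> := EE_sum P (fun j' w => (y j * y j') * (D j w * D j' w)).
  rewrite (bigD1 j) //= big1 ?addr0.
    by rewrite (EE_scale P (y j * y j)) /D EEDD // eqxx expr2.
  move=> j' /negbTE jj'.
  by rewrite (EE_scale P (y j * y j')) /D EEDD // eq_sym jj' mulr0.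
by rewrite mulr0 add0r lerDl sqr_ge0.
Qed.

Lemma Pent (R : realType) n K (psi : 'I_n -> 'I_K) (B : 'M[R]_K) a b :
  (Zmat R psi *m B *m (Zmat R psi)^T) a b = B (psi a) (psi b).
Proof.
rewrite mxE (bigD1 (psi b)) //= big1 ?addr0.
  rewrite !mxE eqxx mulr1 (bigD1 (psi a)) //= big1 ?addr0.
    by rewrite !mxE eqxx mul1r.
  by move=> l /negbTE hl; rewrite !mxE eq_sym hl mul0r.
by move=> l /negbTE hl; rewrite !mxE eq_sym hl mulr0.
Qed.

Lemma Mk_entry (R : realType) n K (psi : 'I_n -> 'I_K) (x : 'cV[R]_n) k
   (A : 'M[R]_n) (v : 'rV[R]_K) i :
  (Mk psi x k A *m v^T) i 0 =
  (psi i == k)%:R * \sum_j (x j 0 * v 0 (psi j)) * A i j.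
Proof.
rewrite /Mk -!mulmxA mul_diag_mx !mxE; congr (_ * _).
apply: eq_bigr => j _; rewrite !mxE big_ord1 !mxE mul1r.
rewrite (bigD1 (psi j)) //= big1 ?addr0.
  by rewrite !mxE eqxx mul1r; ring.
by move=> l /negbTE hl; rewrite !mxE eq_sym hl mul0r.
Qed.

Lemma quad (R : realType) n K (psi : 'I_n -> 'I_K) (x : 'cV[R]_n) k
   (P : 'M[R]_n) (v : 'rV[R]_K) :
  (v *m Expect P (Hk psi x k) *m v^T) 0 0 =
  EE P (fun w => \sum_i (psi i == k)%:R *
         (\sum_j (x j 0 * v 0 (psi j)) * adj R w i j) ^+ 2).
Proof.
rewrite /Expect mulmx_sumr mulmx_suml summxE /EE; apply: eq_bigr => w _.
rewrite -scalemxAr -scalemxAl mxE; congr (_ * _).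
rewrite /Hk.
have -> : v *m ((Mk psi x k (adj R w))^T *m Mk psi x k (adj R w)) *m v^T =
  (Mk psi x k (adj R w) *m v^T)^T *m (Mk psi x k (adj R w) *m v^T).
  move: (Mk psi x k (adj R w)) => M; by rewrite trmx_mul trmxK !mulmxA.
rewrite mxE; apply: eq_bigr => i _; rewrite mxE Mk_entry.
by case: (psi i == k); rewrite ?mul1r ?mul0r // expr2.
Qed.

Lemma cnt (R : realType) n K (psi : 'I_n -> 'I_K) k :
  \sum_i ((psi i == k)%:R : R) = (comm_size psi k)%:R.
Proof.
rewrite /comm_size cardsE -sumr_const [RHS]big_mkcond /=.
by apply: eq_bigr => i _; rewrite unfold_in /= -[eqn _ _]/(psi i == k); case: (psi i == k).
Qed.

Lemma cnt2 (R : realType) n K (psi : 'I_n -> 'I_K) k j :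
  (comm_size psi k)%:R - 1 <= \sum_i ((psi i == k)%:R * (i != j)%:R : R).
Proof.
rewrite -(cnt R) (bigD1 j) //= [X in _ <= X](bigD1 j) //= eqxx mulr0 add0r.
rewrite [X in _ <= X](eq_bigr (fun i => (psi i == k)%:R)) => [|i ->]; last first.
  by rewrite mulr1.
rewrite lerBlDl lerD2r.
by case: (psi j == k).
Qed.

Lemma min_le (R : realType) K (f : 'I_K -> R) k0 l : min_over f k0 <= f l.
Proof.
rewrite /min_over.
have : l \in index_enum 'I_K by rewrite mem_index_enum.
elim: (index_enum _) => [//|a r IH] /=.
rewrite inE big_cons => /orP [/eqP <-|lr].
  by rewrite ge_min lexx.
by rewrite ge_min (IH lr) orbT.
Qed.

Theorem mainTheorem3 (R : realType) (n K : nat) (psi : 'I_n -> 'I_K)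
  (B : 'M[R]_K) (x : 'cV[R]_n) :
  (2 <= n)%N ->
  (forall k : 'I_K, (1 <= comm_size psi k)%N) ->
  B^T = B ->
  (forall k l : 'I_K, 0 <= B k l <= 1) ->
  forall k : 'I_K,
    lambda_min_ge
      (Expect (Zmat R psi *m B *m (Zmat R psi)^T) (Hk psi x k))
      (min_over (fun k' : 'I_K =>
         B k' k * (1 - B k' k) * ((comm_size psi k)%:R - 1)
         * sqnorm (xcomm psi x k')) k).
Proof.
move=> _ hsz hB hB01 k a /eigenvalueP [v hv vnz].
set P := Zmat R psi *m B *m (Zmat R psi)^T.
have Bs : forall a b, B a b = B b a by move=> a' b; rewrite -{1}hB mxE.
have Ps : forall a b, P a b = P b a by move=> a' b; rewrite /P !Pent Bs.
pose gam := fun l => B l k * (1 - B l k).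
have gam0 : forall l, 0 <= gam l.
  by move=> l; have /andP[h0 h1] := hB01 l k; rewrite mulr_ge0 // subr_ge0.
pose nk : R := (comm_size psi k)%:R.
have nk0 : 0 <= nk - 1 by rewrite subr_ge0 /nk ler1n hsz.
pose y := fun j => x j 0 * v 0 (psi j).
pose S := \sum_l v 0 l ^+ 2.
have Spos : 0 < S.
  rewrite lt_def sumr_ge0 ?andbT => [|l _]; last exact: sqr_ge0.
  apply/eqP => S0; move/eqP: vnz; apply; apply/rowP => l.
  have := psumr_eq0P (fun l _ => sqr_ge0 (v 0 l)) S0 (i := l) isT.
  by rewrite mxE => /eqP; rewrite sqrf_eq0 => /eqP.
have key : (v *m Expect P (Hk psi x k) *m v^T) 0 0 = a * S.
  rewrite hv -scalemxAl mxE; congr (_ * _); rewrite mxE.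
  by apply: eq_bigr => l _; rewrite mxE expr2.
rewrite -(ler_pM2r Spos) -key quad.
apply: (@le_trans _ _ (\sum_j y j ^+ 2 * (gam (psi j) * (nk - 1)))).
  rewrite /S mulr_sumr.
  apply: (@le_trans _ _ (\sum_l v 0 l ^+ 2 *
     (B l k * (1 - B l k) * ((comm_size psi k)%:R - 1) * sqnorm (xcomm psi x l)))).
    apply: ler_sum => l _; rewrite mulrC ler_wpM2l ?sqr_ge0 //.
    exact: (min_le (fun k' : 'I_K => B k' k * (1 - B k' k) *
        ((comm_size psi k)%:R - 1) * sqnorm (xcomm psi x k'))).
  rewrite le_eqVlt; apply/orP; left; apply/eqP.
  rewrite /sqnorm.
  under eq_bigr => l _ do rewrite !mulr_sumr.
  rewrite exchange_big /=; apply: eq_bigr => j _.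
  rewrite (bigD1 (psi j)) //= big1 ?addr0.
    rewrite !mxE eqxx mul1r /y /gam /nk; ring.
  by move=> l /negbTE hl; rewrite !mxE eq_sym hl mul0r expr0n /= !mulr0.
apply: (@le_trans _ _ (\sum_i (psi i == k)%:R * \sum_j y j ^+ 2 * Vv P i j)).
  under [X in _ <= X]eq_bigr => i _ do rewrite mulr_sumr.
  rewrite [X in _ <= X]exchange_big /=; apply: ler_sum => j _.
  have -> : \sum_i (psi i == k)%:R * (y j ^+ 2 * Vv P i j) =
            y j ^+ 2 * (gam (psi j) * \sum_i ((psi i == k)%:R * (i != j)%:R)).
    rewrite !mulr_sumr; apply: eq_bigr => i _.
    rewrite /Vv; have [hi|hik] := eqVneq (psi i) k.
      case: ifP => [/eqP eji|/negbT nji].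
        by rewrite eji eqxx !mulr0.
      rewrite eq_sym nji /P Pent hi Bs /gam /=; ring.
    by rewrite !mul0r !mulr0.
  by rewrite ler_wpM2l ?sqr_ge0 // ler_wpM2l // cnt2.
have /= -> := EE_sum P (fun i w => (psi i == k)%:R *
         (\sum_j (x j 0 * v 0 (psi j)) * adj R w i j) ^+ 2).
apply: ler_sum => i _.
rewrite (EE_scale P ((psi i == k)%:R)
   (fun w => (\sum_j (x j 0 * v 0 (psi j)) * adj R w i j) ^+ 2)).
by rewrite ler_wpM2l ?ler0n // EEsq.
Qed.
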